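(* Let $a,b\in\mathbb{Q}_3$ with $\gamma(a)=1$, $\gamma(b)=0$, and let $x=\sum_{k\ge0}x_k3^k\in\mathbb{Z}_3^*$ be such that $A_0=x_0^2+a_0\not\equiv0\pmod3$. Then $x$ is a solution of $x^3+ax=b$ if and only if the congruences $$x_0^3\equiv b_0\pmod3,$$ $$x_0a_0+M_1(x_0)\equiv b_1\pmod3,$$ $$(x_0^2+a_0)x_{k-1}+x_{k-2}a_1+\dots+x_0a_{k-1}+N'_k(x_0,\dots,x_{k-2})+M_k(x_0,\dots,x_{k-2})\equiv b_k\pmod3,\quad k\ge2,$$ are fulfilled, where $M_1(x_0)=\frac{x_0^3-b_0}{3}$ and the integers $M_k(x_0,\dots,x_{k-2})$, $k\ge2$, are defined by $$x_0a_0+M_1(x_0)=b_1+3M_2(x_0),$$ $$(x_0^2+a_0)x_{k-1}+N'_k(x_0,\dots,x_{k-2})+x_{k-2}a_1+\dots+x_0a_{k-1}+M_k(x_0,\dots,x_{k-2})=b_k+3M_{k+1}(x_0,\dots,x_{k-1}),\quad k\ge2.$$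
   Context: Write $a=3^{\gamma(a)}(a_0+a_13+a_23^2+\dots)$, $b=3^{\gamma(b)}(b_0+b_13+b_23^2+\dots)$ in canonical form, with digits $a_j,b_j\in\{0,1,2\}$, $a_0,b_0\ne0$, $\gamma(a),\gamma(b)\in\mathbb{Z}$. $\mathbb{Z}_3^*$ is the set of $3$-adic units; $x\in\mathbb{Z}_3^*$ is written $x=x_0+x_13+x_23^2+\dots$ with $x_j\in\{0,1,2\}$, $x_0\ne0$. For $k\ge1$, $N_k(x_0,\dots,x_{k-1})=\sum \frac{3!}{m_0!\cdots m_{k-1}!}x_0^{m_0}\cdots x_{k-1}^{m_{k-1}}$, the sum over nonnegative integers $m_0,\dots,m_{k-1}$ with $\sum_{i=0}^{k-1}m_i=3$ and $\sum_{i=1}^{k-1}im_i=k$ (so $N_1=0$). Define, for $s$ a positive integer, $$N'_j=\begin{cases}\frac{N_{j-1}}{3}, & j=3s-1,\\ \frac{N_{j-1}}{3}+x_{j/3}^3, & j=3s,\\ \frac{N_{j-1}-x_{(j-1)/3}^3}{3}, & j=3s+1.\end{cases}$$ *)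

(* Defs.v *)
From HB Require Import structures.
From mathcomp Require Import all_boot all_order all_algebra.
Set Implicit Arguments. Unset Strict Implicit. Unset Printing Implicit Defensive.
Import Order.TTheory GRing.Theory Num.Theory.

(* 3-adic integers are represented by their digit sequences d : nat -> nat,
   with d k < 3; the represented element is sum_k d k * 3^k.  *)
Definition is_digits3 (d : nat -> nat) : Prop := forall k, d k < 3.

(* truncation: sum_{i<n} d_i 3^i, the image of the 3-adic number in Z/3^n *)
Definition trunc3 (d : nat -> nat) (n : nat) : nat := \sum_(i < n) d i * 3 ^ i.

(* Z_3 = projective limit of Z/3^n Z: with a = 3 * (sum ad_j 3^j),
   b = sum bd_j 3^j, x = sum xd_j 3^j, the equality x^3 + a x = b in Q_3
   holds iff it holds modulo 3^n for every n. *)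
Definition solves_cubic3 (ad bd xd : nat -> nat) : Prop :=
  forall n : nat,
    (trunc3 xd n) ^ 3 + 3 * trunc3 ad n * trunc3 xd n = trunc3 bd n %[mod 3 ^ n].

(* N_k(x_0,...,x_{k-1}) = sum over (m_0..m_{k-1}) with sum m_i = 3 and
   sum i m_i = k of 3!/(m_0!...m_{k-1}!) x_0^{m_0}...x_{k-1}^{m_{k-1}}.
   (each m_i <= 3, so m ranges over functions 'I_k -> 'I_4) *)
Definition Nk (x : nat -> nat) (k : nat) : nat :=
  \sum_(m : {ffun 'I_k -> 'I_4} |
          ((\sum_(i < k) (m i : nat)) == 3) && ((\sum_(i < k) i * m i) == k))
     (3`! %/ \prod_(i < k) (m i)`!) * \prod_(i < k) x i ^ (m i).

Definition Nprime (x : nat -> nat) (j : nat) : nat :=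
  if j %% 3 == 2 then Nk x j.-1 %/ 3
  else if j %% 3 == 0 then Nk x j.-1 %/ 3 + x (j %/ 3) ^ 3
  else (Nk x j.-1 - x (j.-1 %/ 3) ^ 3) %/ 3.

Definition lhs3 (x a : nat -> nat) (k : nat) (m : int) : int :=
  if k == 0 then Posz (x 0 ^ 3)%N
  else if k == 1 then (Posz (x 0 * a 0)%N + m)%R
  else (Posz ((x 0 ^ 2 + a 0) * x k.-1 + Nprime x k
         + \sum_(1 <= i < k) x (k.-1 - i) * a i)%N + m)%R.

(* carries: M_0 := 0 (unused), M_1 = (x_0^3 - b_0)/3,
   M_{k+1} = (lhs_k - b_k)/3  (exact division whenever the previous
   congruences hold; floor division otherwise) *)
Fixpoint Mcarry (x a b : nat -> nat) (k : nat) : int :=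
  match k with
  | 0 => 0%R
  | k'.+1 => ((lhs3 x a k' (Mcarry x a b k') - Posz (b k')) %/ 3)%Z
  end.

(* Main.v *)
Require Import Defs.
From HB Require Import structures.
From mathcomp Require Import all_boot all_order all_algebra.
From mathcomp Require Import zify ring.
Set Implicit Arguments. Unset Strict Implicit. Unset Printing Implicit Defensive.
Import Order.TTheory GRing.Theory Num.Theory.

Section S.
Variable T : finType.

Definition extf k (g : {ffun 'I_k -> T}) (a : T) : {ffun 'I_k.+1 -> T} :=
  [ffun i => if unlift ord_max i is Some j then g j else a].

Lemma extf_w k g a (i : 'I_k) : extf g a (widen_ord (leqnSn k) i) = g i.
Proof.
rewrite ffunE.
have -> : widen_ord (leqnSn k) i = lift ord_max i by apply/val_inj; rewrite [RHS]lift_max.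
by rewrite liftK.
Qed.

Lemma extf_m k g a : extf (k:=k) g a ord_max = a.
Proof. by rewrite ffunE unlift_none. Qed.

Lemma sum_ffunS k (F : {ffun 'I_k.+1 -> T} -> nat) :
  \sum_(f : {ffun 'I_k.+1 -> T}) F f =
  \sum_(g : {ffun 'I_k -> T}) \sum_(a : T) F (extf g a).
Proof.
rewrite pair_bigA /=.
rewrite (reindex (fun p : {ffun 'I_k -> T} * T => extf p.1 p.2)) //=.
exists (fun f => ([ffun j => f (lift ord_max j)], f ord_max)).
- move=> [g a] _ /=; congr (_, _); last exact: extf_m.
  by apply/ffunP=> j; rewrite ffunE /extf ffunE liftK.
- move=> f _ /=; apply/ffunP=> i; rewrite ffunE.
  by case: unliftP => [j ->|->]; rewrite ?ffunE.
Qed.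
End S.

Lemma dvd_prod_fact k (f : 'I_k -> nat) :
  \prod_(i < k) (f i)`! %| (\sum_(i < k) f i)`!.
Proof.
elim: k f => [|k IH] f; first by rewrite !big_ord0.
rewrite !big_ord_recr /=.
set A := \sum_(i < k) _; set b := f ord_max.
have := bin_fact (leq_addl A b); rewrite addnK => <-.
rewrite [X in _ %| X]mulnC [_ * A`!]mulnC; apply: dvdn_mulr.
by apply: dvdn_mul => //; apply: (IH (fun i => f (widen_ord (leqnSn k) i))).
Qed.


Definition G (x : nat -> nat) k s w : nat :=
  \sum_(m : {ffun 'I_k -> 'I_4} |
          ((\sum_(i < k) (m i : nat)) == s) && ((\sum_(i < k) i * m i) == w))
     (s`! %/ \prod_(i < k) (m i)`!) * \prod_(i < k) x i ^ (m i).

Lemma NkG x k : Nk x k = G x k 3 k.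
Proof. by []. Qed.

Section Ext.
Variables (k : nat) (g : {ffun 'I_k -> 'I_4}) (a : 'I_4).
Lemma sum_extf (F : nat -> nat -> nat) :
  \sum_(i < k.+1) F i (extf g a i) = \sum_(i < k) F i (g i) + F k a.
Proof.
rewrite big_ord_recr /= extf_m; congr (_ + _).
by apply: eq_bigr => i _; rewrite extf_w.
Qed.
Lemma prod_extf (F : nat -> nat -> nat) :
  \prod_(i < k.+1) F i (extf g a i) = \prod_(i < k) F i (g i) * F k a.
Proof.
rewrite big_ord_recr /= extf_m; congr (_ * _).
by apply: eq_bigr => i _; rewrite extf_w.
Qed.
End Ext.

Lemma G_rec x k s w : s <= 3 ->
  G x k.+1 s w = \sum_(a < 4) (if (a <= s) && (k * a <= w)
      then 'C(s, a) * x k ^ a * G x k (s - a) (w - k * a) else 0).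
Proof.
move=> hs.
rewrite /G big_mkcond /= (sum_ffunS (fun m : {ffun 'I_k.+1 -> 'I_4} => _)) /= exchange_big /=.
apply: eq_bigr => a _.
under eq_bigr => g _ do
  rewrite (sum_extf g a (fun _ v => v)) (sum_extf g a (fun i v => i * v))
          (prod_extf g a (fun _ v => v`!)) (prod_extf g a (fun i v => x i ^ v)).
case: ifP => H.
- move/andP: H => [Has Hkw].
  rewrite big_distrr [RHS]big_mkcond /=; apply: eq_bigr => g _.
  set S1 := \sum_(i < k) (g i : nat); set S2 := \sum_(i < k) i * g i.
  have -> : (S1 + a == s) = (S1 == s - a).
    by apply/idP/idP => /eqP H; apply/eqP; lia.
  have -> : (S2 + k * a == w) = (S2 == w - k * a).
    by apply/idP/idP => /eqP H; apply/eqP; lia.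
  case: ifP => [/andP [/eqP Hs _]|]; last by [].
  have := dvd_prod_fact (fun i => (g i : nat)); rewrite -/S1 Hs.
  case/dvdnP => q Hq.
  rewrite Hq mulnK; last by apply: prodn_gt0 => *; apply: fact_gt0.
  rewrite -(bin_fact Has) Hq.
  set P := \prod_(i < k) (g i)`!.
  have -> : 'C(s, a) * (a`! * (q * P)) = ('C(s, a) * q) * (P * a`!) by ring.
  rewrite mulnK; last by rewrite muln_gt0 fact_gt0 andbT; apply: prodn_gt0 => *; apply: fact_gt0.
  ring.
- apply: big1 => g _; case: ifP => // /andP [/eqP H1 /eqP H2]; exfalso.
  move/negbT: H; rewrite negb_and -!ltnNge => /orP[]; lia.
Qed.

Lemma G_0 x s w : G x 0 s w = ((s == 0) && (w == 0)).
Proof.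
rewrite /G.
under eq_bigl do rewrite !big_ord0.
under eq_bigr do rewrite !big_ord0.
rewrite divn1 muln1 eq_sym [0 == w]eq_sym.
case: ((s == 0) && (w == 0)) / andP => [[/eqP -> _]|H].
  by rewrite sum_nat_const card_ffun !card_ord.
by rewrite big_pred0.
Qed.

Open Scope ring_scope.
Definition Px (x : nat -> nat) k : {poly int} := \sum_(i < k) (x i)%:R *: 'X^i.

Lemma Px_S x k : Px x k.+1 = Px x k + (x k)%:R *: 'X^k.
Proof. by rewrite /Px big_ord_recr. Qed.

Lemma G_poly x k s w : (s <= 3)%N -> (Px x k ^+ s)`_w = (G x k s w)%:R.
Proof.
elim: k s w => [|k IH] s w hs.
  rewrite /Px big_ord0 expr0n G_0 -polyC_natr coefC.
  by case: s {hs} => [|s] /=; case: w.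
rewrite Px_S exprDn coef_sum G_rec // natr_sum.
rewrite (big_ord_widen 4 (fun i => ((Px x k ^+ (s - i) * ((x k)%:R *: 'X^k) ^+ i) *+ 'C(s, i))`_w)) //.
rewrite big_mkcond /=; apply: eq_bigr => a _.
rewrite exprZn -exprM -scalerAr coefMn coefZ coefMXn.
rewrite ltnS.
case: (leqP a s) => Has /=; last first.
  by [].
case: (leqP (k * a) w) => Hkw /=; last by rewrite mulr0 mul0rn.
rewrite IH; last by lia.
by rewrite !natrM natrX mulrnAl -mulr_natl; ring.
Qed.

Lemma G0 x k v : G x k 0%N v = (v == 0)%N.
Proof.
apply/eqP; rewrite -(eqr_nat int) -G_poly // expr0 coefC.
by case: v.
Qed.

Close Scope ring_scope.

Lemma G_div x k w : exists q, G x k 3 w =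
  3 * q + (if (w %% 3 == 0) && (w %/ 3 < k) then x (w %/ 3) ^ 3 else 0).
Proof.
elim: k w => [|k IH] w.
  by exists 0; rewrite G_0 andbF.
rewrite G_rec // !big_ord_recr big_ord0 /=.
have [q Hq] := IH w.
rewrite muln0 leq0n /= !subn0 bin0 expn0 mul1n Hq G0 add0n.
rewrite (_ : 'C(3, 1) = 3) // (_ : 'C(3, 2) = 3) // (_ : 'C(3, 3) = 1) //.
exists (q + (if k * 1 <= w then x k ^ 1 * G x k (3 - 1) (w - k * 1) else 0)
          + (if k * 2 <= w then x k ^ 2 * G x k (3 - 2) (w - k * 2) else 0)).

have [->|Hw] := eqVneq w (k * 3).
  rewrite leqnn subnn /= mulnK // modnMl /= ltnn /= ltnSn.
  have h1 : k * 1 <= k * 3 by lia.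
  have h2 : k * 2 <= k * 3 by lia.
  rewrite h1 h2; ring.
have -> : (if k * 3 <= w then 1 * x k ^ 3 * (w - k * 3 == 0) else 0) = 0.
  case: ifP => // h; have -> : (w - k * 3 == 0) = false by apply/negbTE/eqP; lia.
  by rewrite muln0.
have -> : (w %% 3 == 0) && (w %/ 3 < k.+1) = (w %% 3 == 0) && (w %/ 3 < k).
  by apply/idP/idP => /andP[/eqP ? ?]; apply/andP; split => //; lia.
case: (_ && _); case: ifP => _; case: ifP => _; ring.
Qed.

Lemma G_stable x k w : w < k -> G x k.+1 3 w = G x k 3 w.
Proof.
move=> hw; rewrite G_rec // !big_ord_recr big_ord0 /= muln0 leq0n /= !subn0 bin0 expn0 !mul1n.
have -> : (k * 1 <= w) = false by apply/negbTE; rewrite -ltnNge; lia.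
have -> : (k * 2 <= w) = false by apply/negbTE; rewrite -ltnNge; lia.
have -> : (k * 3 <= w) = false by apply/negbTE; rewrite -ltnNge; lia.
by rewrite !addn0.
Qed.

Lemma G_stable_le x n i : i < n -> G x n 3 i = G x i.+1 3 i.
Proof.
elim: n => [//|n IH] hi.
case: (ltngtP i n) => h; last 1 first.
- by rewrite h.
- by rewrite G_stable // IH.
- lia.
Qed.

Lemma G_2_0 x k : 0 < k -> G x k 2 0 = x 0 ^ 2.
Proof.
elim: k => [//|k IH] _.
rewrite G_rec // !big_ord_recr big_ord0 /= muln0 leqnn /= !subn0 bin0 expn0 !mul1n.
case: k IH => [|k] IH.
  by rewrite !mul0n /= !G_0 /=; ring.
rewrite IH //.
have -> : (k.+1 * 1 <= 0) = false by [].
have -> : (k.+1 * 2 <= 0) = false by [].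
by rewrite !addn0.
Qed.

Lemma G_diag x i : 0 < i -> G x i.+1 3 i = Nk x i + 3 * x 0 ^ 2 * x i.
Proof.
move=> hi; rewrite G_rec // !big_ord_recr big_ord0 /= muln0 leq0n /= !subn0 bin0 expn0 !mul1n.
rewrite muln1 leqnn subnn G_2_0 //.
have -> : (i * 2 <= i) = false by apply/negbTE; rewrite -ltnNge; lia.
have -> : (i * 3 <= i) = false by apply/negbTE; rewrite -ltnNge; lia.
rewrite NkG (_ : 'C(3, 1) = 3) //; ring.
Qed.

Definition Tn (x a : nat -> nat) k : nat :=
  if k == 0 then x 0 ^ 3 else if k == 1 then x 0 * a 0
  else (x 0 ^ 2 + a 0) * x k.-1 + Nprime x k + \sum_(1 <= i < k) x (k.-1 - i) * a i.
Definition qN (x : nat -> nat) n := if n %% 3 == 0 then (Nk x n - x (n %/ 3) ^ 3) %/ 3 else Nk x n %/ 3.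
Definition D (x : nat -> nat) n := if n == 0 then 0 else x 0 ^ 2 * x n + qN x n.
Definition Dp (x : nat -> nat) n := if n is n'.+1 then D x n' else 0.
Definition Rc (x a : nat -> nat) i := if i == 0 then x 0 ^ 3
  else Nk x i + 3 * x 0 ^ 2 * x i + \sum_(j < i) a j * x (i.-1 - j).

Lemma Nk_split x n : 0 < n ->
  Nk x n = 3 * qN x n + (if n %% 3 == 0 then x (n %/ 3) ^ 3 else 0).
Proof.
move=> hn; have [q Hq] := G_div x n n.
have h3 : n %/ 3 < n by lia.
rewrite /qN NkG Hq h3 andbT.
by case: ifP => _; lia.
Qed.

Lemma Nprime_qN x n : 2 <= n ->
  Nprime x n = qN x n.-1 + (if n %% 3 == 0 then x (n %/ 3) ^ 3 else 0).
Proof.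
move=> hn; rewrite /Nprime /qN.
have : n %% 3 < 3 by rewrite ltn_mod.
case E: (n %% 3) => [|[|[|?]]] // _.
- have -> : (n.-1 %% 3 == 0) = false by apply/negbTE/eqP; lia.
  by [].
- have -> : (n.-1 %% 3 == 0) = true by apply/eqP; lia.
  by rewrite addn0.
- have -> : (n.-1 %% 3 == 0) = false by apply/negbTE/eqP; lia.
  by rewrite addn0.
Qed.

Lemma level x a n : Rc x a n + Dp x n = Tn x a n + 3 * D x n.
Proof.
case: n => [|[|n]].
- by rewrite /Rc /Dp /Tn /D /=; ring.
- rewrite /Rc /Dp /Tn /D /= big_ord1 (Nk_split x (n:=1)) //= addn0 subnn.
  ring.
rewrite /Rc /Dp /Tn /D /= Nprime_qN // Nk_split //= big_ord_recl /=.
rewrite subn0 big_add1 /= big_mkord.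
rewrite (_ : \sum_(i < n.+1) a (bump 0 i) * x (n.+1 - bump 0 i) =
             \sum_(i < n.+1) x (n.+1 - i.+1) * a i.+1); last first.
  by apply: eq_bigr => i _; rewrite mulnC.
ring.
Qed.

Lemma tele x a n : \sum_(i < n) Rc x a i * 3 ^ i =
  \sum_(k < n) Tn x a k * 3 ^ k + 3 ^ n * Dp x n.
Proof.
elim: n => [|n IH]; first by rewrite !big_ord0.
rewrite !big_ord_recr /= IH expnS.
have L := level x a n.
have E : 3 ^ n * Dp x n + Rc x a n * 3 ^ n = (Rc x a n + Dp x n) * 3 ^ n by ring.
rewrite -addnA E L; ring.
Qed.

Lemma G_1_3 x : G x 1 3 0 = x 0 ^ 3.
Proof. rewrite G_rec // !big_ord_recr big_ord0 /= !G_0 /= binn; ring. Qed.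

Open Scope ring_scope.

Lemma coef_Px x n j : (Px x n)`_j = if (j < n)%N then (x j)%:R else 0.
Proof. by rewrite /Px -(poly_def n (fun i => (x i)%:R)) coef_poly. Qed.

Lemma horner_Px x n : (Px x n).[3%:R] = (trunc3 x n)%:R.
Proof.
rewrite /Px horner_sum /trunc3 natr_sum; apply: eq_bigr => i _.
by rewrite hornerZ hornerXn natrM natrX.
Qed.

Definition Rp x a n := Px x n ^+ 3 + 'X * Px a n * Px x n.

Lemma coef_Rp x a n i : (i < n)%N -> (Rp x a n)`_i = (Rc x a i)%:R.
Proof.
move=> hi; rewrite /Rp coefD G_poly // G_stable_le // -mulrA coefXM /Rc.
case: i hi => [|i] hi /=.
  by rewrite G_1_3 addr0.
rewrite G_diag // coefM !natrD; congr (_ + _).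
rewrite natr_sum; apply: eq_bigr => j _.
rewrite !coef_Px natrM.
have -> : (j < n)%N by have := ltn_ord j; lia.
have -> : (i - j < n)%N by lia.
by [].
Qed.

Lemma horner_split (p : {poly int}) n : exists E : int,
  p.[3%:R] = \sum_(i < n) p`_i * 3%:R ^+ i + 3%:R ^+ n * E.
Proof.
exists (\sum_(i < size p) p`_(n + i) * 3%:R ^+ i).
rewrite (horner_coef_wide _ (leq_addl n (size p))) big_split_ord /=.
congr (_ + _); rewrite big_distrr /=; apply: eq_bigr => i _.
by rewrite exprD; ring.
Qed.

Lemma key x a n : exists E : int,
  ((trunc3 x n ^ 3 + 3 * trunc3 a n * trunc3 x n)%N)%:R =
  \sum_(k < n) (Tn x a k)%:R * 3%:R ^+ k + 3%:R ^+ n * E.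
Proof.
have [E1 HE1] := horner_split (Rp x a n) n.
exists ((Dp x n)%:R + E1).
have -> : ((trunc3 x n ^ 3 + 3 * trunc3 a n * trunc3 x n)%N)%:R = (Rp x a n).[3%:R].
  rewrite /Rp hornerD !hornerM hornerX !horner_Px natrD !natrM.
  by [].
rewrite HE1.
rewrite (eq_bigr (fun i : 'I_n => (Rc x a i)%:R * 3%:R ^+ i)); last first.
  by move=> i _; rewrite coef_Rp.
have := congr1 (fun m : nat => m%:R : int) (tele x a n).
rewrite /= !natr_sum natrD natrM natrX.
have e1 : \sum_(i < n) ((Rc x a i * 3 ^ i)%N)%:R = \sum_(i < n) (Rc x a i)%:R * 3%:R ^+ i :> int.
  by apply: eq_bigr => i _; rewrite natrM natrX.
have e2 : ((\sum_(k < n) Tn x a k * 3 ^ k)%N)%:R = \sum_(k < n) (Tn x a k)%:R * 3%:R ^+ k :> int.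
  by rewrite natr_sum; apply: eq_bigr => i _; rewrite natrM natrX.
rewrite e1 e2 => ->; ring.
Qed.

Lemma modn_dvdz (p q d : nat) : (p = q %[mod d])%N <-> (d%:Z %| p%:Z - q%:Z)%Z.
Proof.
rewrite -eqz_mod_dvd !modz_nat; split => [->//|/eqP [] //].
Qed.

Lemma L_eq x a b k :
  lhs3 x a k (Mcarry x a b k) = (Tn x a k)%:Z + Mcarry x a b k.
Proof. by case: k => [|[|k]]; rewrite /lhs3 /Tn /= ?addr0. Qed.

Lemma carry x a b n :
  (forall k, (k < n)%N -> (lhs3 x a k (Mcarry x a b k) = Posz (b k) %[mod 3])%Z) ->
  \sum_(k < n) (Tn x a k)%:Z * 3%:Z ^+ k = (trunc3 b n)%:Z + 3%:Z ^+ n * Mcarry x a b n.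
Proof.
elim: n => [|n IH] H.
  by rewrite big_ord0 /trunc3 big_ord0 /= mulr0 addr0.
rewrite big_ord_recr /= IH; last by move=> k hk; apply: H; lia.
have Hn := H n (ltnSn n).
move/eqP: Hn; rewrite eqz_mod_dvd => /divzK.
rewrite L_eq /= => HM.
rewrite /trunc3 big_ord_recr /= -/(trunc3 b n) PoszD PoszM exprS.
move: HM; set q := divz _ _ => HM.
rewrite (_ : 3%:Z * 3%:Z ^+ n * q = 3%:Z ^+ n * (q * 3)); last by ring.
rewrite HM.
have -> : ((3 ^ n)%N)%:Z = 3%:Z ^+ n by rewrite -natz natrX natz.
ring.
Qed.

Lemma p3 m : Posz (3 ^ m)%N = 3%:Z ^+ m.
Proof. by rewrite -natz natrX natz. Qed.

Lemma keyZ x a n : exists E : int,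
  Posz (trunc3 x n ^ 3 + 3 * trunc3 a n * trunc3 x n)%N =
  \sum_(k < n) (Tn x a k)%:Z * 3%:Z ^+ k + 3%:Z ^+ n * E.
Proof.
have [E HE] := key x a n; exists E; move: HE.
have e : \sum_(k < n) (Tn x a k)%:R * 3%:R ^+ k =
         \sum_(k < n) (Tn x a k)%:Z * 3%:Z ^+ k :> int.
  by apply: eq_bigr => k _; rewrite !natz.
by rewrite e !natz.
Qed.

Close Scope ring_scope.
Unset Implicit Arguments.

Theorem theorem3p7 (ad bd xd : nat -> nat) :
  is_digits3 ad -> ad 0 != 0 ->
  is_digits3 bd -> bd 0 != 0 ->
  is_digits3 xd -> xd 0 != 0 ->
  ~~ (3 %| xd 0 ^ 2 + ad 0) ->
  solves_cubic3 ad bd xd <->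
  (forall k : nat,
     (lhs3 xd ad k (Mcarry xd ad bd k) = Posz (bd k) %[mod 3])%Z).
Proof.
move=> _ _ _ _ _ _ _; split.
- move=> Hs k; elim/ltn_ind: k => k IHk.
  have Hc := carry IHk.
  have [E HE] := keyZ xd ad k.+1.
  have := Hs k.+1; move/modn_dvdz.
  have tb : trunc3 bd k.+1 = (trunc3 bd k + bd k * 3 ^ k)%N by rewrite /trunc3 big_ord_recr.
  rewrite HE big_ord_recr /= Hc tb PoszD PoszM !p3 => Hd.
  apply/eqP; rewrite eqz_mod_dvd L_eq.
  have : ((3%:Z ^+ k * 3)%R %| (3%:Z ^+ k * ((Tn xd ad k)%:Z + Mcarry xd ad bd k - Posz (bd k)))%R)%Z.
    set D := (X in (_ %| X)%Z) in Hd.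
    have -> : (3%:Z ^+ k * ((Tn xd ad k)%:Z + Mcarry xd ad bd k - Posz (bd k)) =
              D - 3%:Z ^+ k * 3 * E)%R by rewrite /D exprSr; ring.
    rewrite exprSr in Hd.
    by apply: rpredB => //; apply: dvdz_mulr; apply: dvdzz.
  by rewrite dvdz_mul2l // expf_neq0.
- move=> H n; apply/modn_dvdz.
  have [E HE] := keyZ xd ad n.
  rewrite HE (carry (fun k _ => H k)) p3.
  have -> : ((trunc3 bd n)%:Z + 3%:Z ^+ n * Mcarry xd ad bd n + 3%:Z ^+ n * E - (trunc3 bd n)%:Z
          = 3%:Z ^+ n * (Mcarry xd ad bd n + E))%R by ring.
  by apply: dvdz_mulr; apply: dvdzz.
Qed.
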